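(* Let $(\Sigma_+,\Sigma_-,N_1,N_2,N_3)$ be a solution of the Wainwright–Hsu system satisfying the constraint, with $N_1<0$ and $N_2,N_3>0$. Then $\lim_{\tau\to\infty}N_1(\tau)=0$ and $\lim_{\tau\to\infty}N_2(\tau)=\lim_{\tau\to\infty}N_3(\tau)=\infty$.
   Context: Wainwright–Hsu system: for functions $N_1,N_2,N_3,\Sigma_+,\Sigma_-$ of $\tau\in\mathbb{R}$ (prime denotes $d/d\tau$), $N_1'=(q-4\Sigma_+)N_1$, $N_2'=(q+2\Sigma_++2\sqrt3\Sigma_-)N_2$, $N_3'=(q+2\Sigma_+-2\sqrt3\Sigma_-)N_3$, $\Sigma_+'=-(2-q)\Sigma_+-3S_+$, $\Sigma_-'=-(2-q)\Sigma_--3S_-$, where $q=2(\Sigma_+^2+\Sigma_-^2)$, $S_+=\frac12[(N_2-N_3)^2-N_1(2N_1-N_2-N_3)]$, $S_-=\frac{\sqrt3}{2}(N_3-N_2)(N_1-N_2-N_3)$, together with the constraint $\Sigma_+^2+\Sigma_-^2+\frac34[N_1^2+N_2^2+N_3^2-2(N_1N_2+N_2N_3+N_1N_3)]=1$. Solutions with these sign conditions exist for all $\tau\in\mathbb{R}$ and the signs are preserved. *)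

(* Defs.v *)
From Stdlib Require Import Reals.
From Coquelicot Require Import Coquelicot.
Open Scope R_scope.

Definition WH_q (sp sm : R) : R := 2 * (sp ^ 2 + sm ^ 2).

Definition WH_Splus (n1 n2 n3 : R) : R :=
  / 2 * ((n2 - n3) ^ 2 - n1 * (2 * n1 - n2 - n3)).

Definition WH_Sminus (n1 n2 n3 : R) : R :=
  sqrt 3 / 2 * (n3 - n2) * (n1 - n2 - n3).

Definition WH_constraint (n1 n2 n3 sp sm : R) : Prop :=
  sp ^ 2 + sm ^ 2
  + 3 / 4 * (n1 ^ 2 + n2 ^ 2 + n3 ^ 2 - 2 * (n1 * n2 + n2 * n3 + n1 * n3)) = 1.

Definition WH_solution (N1 N2 N3 Sp Sm : R -> R) : Prop :=
  forall t : R,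
    is_derive N1 t ((WH_q (Sp t) (Sm t) - 4 * Sp t) * N1 t) /\
    is_derive N2 t ((WH_q (Sp t) (Sm t) + 2 * Sp t + 2 * sqrt 3 * Sm t) * N2 t) /\
    is_derive N3 t ((WH_q (Sp t) (Sm t) + 2 * Sp t - 2 * sqrt 3 * Sm t) * N3 t) /\
    is_derive Sp t (- (2 - WH_q (Sp t) (Sm t)) * Sp t - 3 * WH_Splus (N1 t) (N2 t) (N3 t)) /\
    is_derive Sm t (- (2 - WH_q (Sp t) (Sm t)) * Sm t - 3 * WH_Sminus (N1 t) (N2 t) (N3 t)).

(* Main.v *)
Require Import Defs.
From Stdlib Require Import Reals.
From Coquelicot Require Import Coquelicot.
From Stdlib Require Import Lra Psatz.
Open Scope R_scope.

Lemma sqrt3_facts : sqrt 3 * sqrt 3 = 3 /\ 0 < sqrt 3 /\ sqrt 3 < 2.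
Proof.
  assert (H: sqrt 3 * sqrt 3 = 3) by (apply sqrt_sqrt; lra).
  assert (H0: 0 < sqrt 3) by (apply sqrt_lt_R0; lra).
  split; [exact H|split; [exact H0|nra]].
Qed.

Lemma key (n1 n2 n3 sp sm : R) :
  n1 < 0 -> 0 < n2 -> 0 < n3 -> WH_constraint n1 n2 n3 sp sm ->
  let q := WH_q sp sm in
  let r := sqrt 3 in
  let d1 := (q - 4 * sp) * n1 in
  let d2 := (q + 2 * sp + 2 * r * sm) * n2 in
  let d3 := (q + 2 * sp - 2 * r * sm) * n3 in
  let dsp := - (2 - q) * sp - 3 * WH_Splus n1 n2 n3 in
  let dsm := - (2 - q) * sm - 3 * WH_Sminus n1 n2 n3 in
  let s := n2 + n3 - n1 in
  let u := n2 - n3 in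
  let D := - n1 * n2 * n3 in
  let dD := (- d1 * n2 + - n1 * d2) * n3 + - n1 * n2 * d3 in
  1/2 <= dsp - r / 2 * (dsm * (u / s) + sm * (((d2 - d3) * s - u * (d2 + d3 - d1)) / s ^ 2))
         + 2 * (dD * / D).
Proof.
  intros h1 h2 h3 hc q r d1 d2 d3 dsp dsm s u D dD.
  destruct sqrt3_facts as [rr [r0 r2]]. fold r in rr, r0, r2.
  unfold WH_constraint in hc. unfold WH_q in q.
  set (x := - n1).
  assert (hx : 0 < x) by (unfold x; lra).
  assert (hs : 0 < s) by (unfold s; lra).
  assert (hD : 0 < D) by (unfold D; assert (0 < -n1 * n2) by nra; nra).
  assert (EdL : dD * / D = 3 * q).
  { unfold dD, D, d1, d2, d3. field. split; [lra|]. split; lra. }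
  set (al := u * x / s ^ 2).
  set (be := ((n2 + n3) * s - u ^ 2) / s ^ 2).
  set (ga := u / s).
  assert (Edg : ((d2 - d3) * s - u * (d2 + d3 - d1)) / s ^ 2 = 6 * sp * al + 2 * r * sm * be).
  { unfold al, be, d1, d2, d3, u, s, x. field. lra. }
  assert (Hu : -s <= u <= s) by (unfold u, s; lra).
  assert (Hga : -1 <= ga <= 1).
  { unfold ga. split.
    - apply Rmult_le_reg_r with s; [lra|]. field_simplify; lra.
    - apply Rmult_le_reg_r with s; [lra|]. field_simplify; lra. }
  assert (Hal : -1 <= al <= 1).
  { unfold al. assert (0 < s^2) by nra. assert (x <= s) by (unfold x, s; lra).
    assert (-(s^2) <= u * x <= s^2) by (split; nra).
    split; apply Rmult_le_reg_r with (s^2); try lra; field_simplify; lra. }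
  assert (Hbe : 0 <= be <= 1).
  { unfold be. assert (0 < s^2) by nra. assert (n2 + n3 <= s) by (unfold s; lra).
    assert (u^2 <= (n2+n3)^2) by (unfold u; nra).
    assert (0 <= (n2 + n3) * s - u ^ 2 <= s^2) by (split; nra).
    split; apply Rmult_le_reg_r with (s^2); try lra; field_simplify; lra. }
  rewrite EdL, Edg. fold ga.
  assert (Hsu : u * s * ga = u ^ 2) by (unfold ga; field; lra).
  set (P := sp ^ 2 + sm ^ 2).
  assert (Hq : q = 2 * P) by (unfold q, P; ring).
  assert (HP : P <= 1).
  { assert (0 <= - n1 * (n2 + n3)) by (apply Rmult_le_pos; lra).
    pose proof (pow2_ge_0 (n2 - n3)). pose proof (pow2_ge_0 n1).
    assert (0 <= (n2 - n3)^2 + n1^2 - 2 * n1 * (n2 + n3)) by lra.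
    unfold P. nra. }
  assert (HP0 : 0 <= P) by (unfold P; nra).
  set (y1 := (2 - q) * sp).
  assert (T1 : - y1 >= -1/4 - 4 * sp ^ 2).
  { assert (y1^2 <= 4 * sp^2).
    { unfold y1. assert (0 <= 2 - q <= 2) by lra.
      assert ((2-q)^2 <= 4) by nra. nra. }
    pose proof (pow2_ge_0 (y1 - 1/2)). nra. }
  set (y2 := r / 2 * (2 - q) * ga * sm).
  assert (T2 : y2 >= -1/4 - 3 * sm ^ 2).
  { assert (y2^2 <= 3 * sm^2).
    { unfold y2. assert (0 <= 2 - q <= 2) by lra.
      assert ((2-q)^2 <= 4) by nra. assert (ga^2 <= 1) by nra.
      assert (((2-q) * ga)^2 <= 4) by nra.
      assert (Heq : (r / 2 * (2 - q) * ga * sm) ^ 2 = r * r / 4 * (((2-q)*ga)^2) * sm^2).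
      { field. }
      rewrite Heq.
      rewrite rr. nra. }
    pose proof (pow2_ge_0 (y2 + 1/2)). nra. }
  assert (T3 : - (r * 3 * sp * sm * al) >= - 3 * P).
  { set (z := r * al). assert (-2 <= z <= 2) by (unfold z; split; nra).
    assert (0 <= (2 + z) / 4 * (sp - sm)^2) by (apply Rmult_le_pos; [lra|apply pow2_ge_0]).
    assert (0 <= (2 - z) / 4 * (sp + sm)^2) by (apply Rmult_le_pos; [lra|apply pow2_ge_0]).
    replace (r * 3 * sp * sm * al) with (3 * (z * sp * sm)) by (unfold z; ring).
    assert (P - z * sp * sm = (2 + z) / 4 * (sp - sm)^2 + (2 - z) / 4 * (sp + sm)^2)
      by (unfold P; field).
    lra. }
  assert (T4 : - (sm ^ 2 * be) >= - sm ^ 2) by nra.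
  assert (TS : -3 * (/ 2 * (u ^ 2 - n1 * (2 * n1 - n2 - n3))) + 9/4 * u^2 >= 1 - P).
  { unfold u. unfold P. nra. }
  assert (E : dsp - r / 2 * (dsm * ga + sm * (6 * sp * al + 2 * r * sm * be)) + 2 * (3 * q)
     = - y1 + (-3 * (/ 2 * (u ^ 2 - n1 * (2 * n1 - n2 - n3)))) + y2 + (3 * (r * r) / 4) * (u * s * ga)
       - (r * 3 * sp * sm * al) - (r * r) * (sm^2 * be) + 6 * q).
  { unfold dsp, dsm, WH_Splus, WH_Sminus, y1, y2. fold r. unfold u, s. field. }
  rewrite E, rr, Hsu. unfold P in *. clearbody y1 y2 al be ga q. subst q. pose proof (pow2_ge_0 sp). pose proof (pow2_ge_0 sm). lra.
Qed.

Lemma cons_facts n1 n2 n3 sp sm : n1 < 0 -> 0 < n2 -> 0 < n3 ->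
  WH_constraint n1 n2 n3 sp sm ->
  sp ^ 2 <= 1 /\ sm ^ 2 <= 1 /\ - n1 * (n2 + n3) <= 2 / 3.
Proof.
  intros h1 h2 h3 hc. unfold WH_constraint in hc.
  assert (0 <= - n1 * (n2 + n3)) by (apply Rmult_le_pos; lra).
  pose proof (pow2_ge_0 (n2 - n3)). pose proof (pow2_ge_0 n1).
  pose proof (pow2_ge_0 sp). pose proof (pow2_ge_0 sm).
  assert (0 <= (n2 - n3)^2 + n1^2 - 2 * n1 * (n2 + n3)) by lra.
  assert (E : n1 ^ 2 + n2 ^ 2 + n3 ^ 2 - 2 * (n1 * n2 + n2 * n3 + n1 * n3)
     = (n2 - n3)^2 + n1^2 - 2 * n1 * (n2 + n3)) by ring.
  rewrite E in hc. repeat split; nra.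
Qed.

Lemma abs_le1 y : y ^ 2 <= 1 -> -1 <= y <= 1.
Proof. intros; split; nra. Qed.

Definition gf (N1 N2 N3 : R -> R) t := (N2 t - N3 t) / (N2 t + N3 t - N1 t).
Definition Df (N1 N2 N3 : R -> R) t := - N1 t * N2 t * N3 t.
Definition Vf (N1 N2 N3 Sp Sm : R -> R) t :=
  Sp t - sqrt 3 / 2 * (Sm t * gf N1 N2 N3 t) + 2 * ln (Df N1 N2 N3 t).

Lemma V_deriv (N1 N2 N3 Sp Sm : R -> R) :
  WH_solution N1 N2 N3 Sp Sm ->
  (forall t : R, WH_constraint (N1 t) (N2 t) (N3 t) (Sp t) (Sm t)) ->
  (forall t : R, N1 t < 0 /\ 0 < N2 t /\ 0 < N3 t) ->
  forall t, exists dv, is_derive (Vf N1 N2 N3 Sp Sm) t dv /\ 1/2 <= dv.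
Proof.
  intros Hsol Hcon Hsgn.
  set (g := gf N1 N2 N3). set (D := Df N1 N2 N3).
  intro t. destruct (Hsol t) as [H1 [H2 [H3 [H4 H5]]]].
  destruct (Hsgn t) as [s1 [s2 s3]].
  pose proof (key (N1 t) (N2 t) (N3 t) (Sp t) (Sm t) s1 s2 s3 (Hcon t)) as K.
  cbv zeta in K.
  set (q := WH_q (Sp t) (Sm t)) in *.
  set (d1 := (q - 4 * Sp t) * N1 t) in *.
  set (d2 := (q + 2 * Sp t + 2 * sqrt 3 * Sm t) * N2 t) in *.
  set (d3 := (q + 2 * Sp t - 2 * sqrt 3 * Sm t) * N3 t) in *.
  assert (Hg : is_derive g t (((d2 - d3) * (N2 t + N3 t - N1 t) - (N2 t - N3 t) * (d2 + d3 - d1)) / (N2 t + N3 t - N1 t) ^ 2)).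
  { apply (is_derive_div (fun t => N2 t - N3 t) (fun t => N2 t + N3 t - N1 t)).
    - exact (is_derive_minus _ _ _ _ _ H2 H3).
    - exact (is_derive_minus _ _ _ _ _ (is_derive_plus _ _ _ _ _ H2 H3) H1).
    - lra. }
  assert (HD : is_derive D t ((- d1 * N2 t + - N1 t * d2) * N3 t + - N1 t * N2 t * d3)).
  { exact (is_derive_mult _ _ _ _ _ (is_derive_mult _ _ _ _ _ (is_derive_opp _ _ _ H1) H2 Rmult_comm) H3 Rmult_comm). }
  assert (Dpos : 0 < D t).
  { unfold D, Df. assert (0 < - N1 t * N2 t) by nra. nra. }
  assert (Hln : is_derive (fun t => ln (D t)) t (((- d1 * N2 t + - N1 t * d2) * N3 t + - N1 t * N2 t * d3) * / D t)).
  { exact (is_derive_comp ln D t _ _ (is_derive_ln _ Dpos) HD). }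
  eexists. split.
  - exact (is_derive_plus _ _ _ _ _ (is_derive_minus _ _ _ _ _ H4 (is_derive_scal _ _ _ _ (is_derive_mult _ _ _ _ _ H5 Hg Rmult_comm))) (is_derive_scal _ _ _ _ Hln)).
  - exact K.
Qed.

Lemma V_grow (N1 N2 N3 Sp Sm : R -> R) :
  WH_solution N1 N2 N3 Sp Sm ->
  (forall t : R, WH_constraint (N1 t) (N2 t) (N3 t) (Sp t) (Sm t)) ->
  (forall t : R, N1 t < 0 /\ 0 < N2 t /\ 0 < N3 t) ->
  forall t, 0 < t -> Vf N1 N2 N3 Sp Sm 0 + t / 2 <= Vf N1 N2 N3 Sp Sm t.
Proof.
  intros Hsol Hcon Hsgn t ht.
  pose proof (V_deriv N1 N2 N3 Sp Sm Hsol Hcon Hsgn) as HV.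
  destruct (MVT_gen (Vf N1 N2 N3 Sp Sm) 0 t
     (fun y => Derive (Vf N1 N2 N3 Sp Sm) y)) as [c [_ Hc]].
  - intros y _. destruct (HV y) as [dv [Hd _]].
    rewrite (is_derive_unique _ _ _ Hd). exact Hd.
  - intros y _. destruct (HV y) as [dv [Hd _]].
    apply derivable_continuous_pt. exists dv. apply is_derive_Reals. exact Hd.
  - destruct (HV c) as [dv [Hd Hdv]].
    rewrite (is_derive_unique _ _ _ Hd) in Hc. nra.
Qed.

Lemma D_grow (N1 N2 N3 Sp Sm : R -> R) :
  WH_solution N1 N2 N3 Sp Sm ->
  (forall t : R, WH_constraint (N1 t) (N2 t) (N3 t) (Sp t) (Sm t)) ->
  (forall t : R, N1 t < 0 /\ 0 < N2 t /\ 0 < N3 t) ->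
  forall M, exists T, forall t, T < t -> M < Df N1 N2 N3 t.
Proof.
  intros Hsol Hcon Hsgn M.
  set (M' := Rmax M 1).
  set (V0 := Vf N1 N2 N3 Sp Sm 0).
  exists (Rmax 1 (4 * (2 * ln M' + 2 - V0))). intros t Ht.
  assert (ht : 0 < t) by (pose proof (Rmax_l 1 (4 * (2 * ln M' + 2 - V0))); lra).
  assert (ht2 : 4 * (2 * ln M' + 2 - V0) < t)
    by (pose proof (Rmax_r 1 (4 * (2 * ln M' + 2 - V0))); lra).
  pose proof (V_grow N1 N2 N3 Sp Sm Hsol Hcon Hsgn t ht) as G. fold V0 in G.
  destruct (Hsgn t) as [s1 [s2 s3]].
  destruct (cons_facts _ _ _ _ _ s1 s2 s3 (Hcon t)) as [c1 [c2 c3]].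
  apply abs_le1 in c1. apply abs_le1 in c2.
  destruct sqrt3_facts as [rr [r0 r2]].
  assert (Hg : -1 <= gf N1 N2 N3 t <= 1).
  { unfold gf. set (s := N2 t + N3 t - N1 t). assert (0 < s) by (unfold s; lra).
    split.
    - apply Rmult_le_reg_r with s; [lra|]. field_simplify; unfold s; lra.
    - apply Rmult_le_reg_r with s; [lra|]. field_simplify; unfold s; lra. }
  assert (Hsg : -1 <= Sm t * gf N1 N2 N3 t <= 1) by (split; nra).
  unfold Vf in G.
  assert (HlnD : ln M' < ln (Df N1 N2 N3 t)) by nra.
  assert (Dpos : 0 < Df N1 N2 N3 t).
  { unfold Df. assert (0 < - N1 t * N2 t) by nra. nra. }
  assert (M' < Df N1 N2 N3 t).
  { apply ln_lt_inv; try lra. unfold M'. pose proof (Rmax_r M 1). lra. }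
  pose proof (Rmax_l M 1). unfold M' in *. lra.
Qed.

Theorem mainTheorem12 (N1 N2 N3 Sp Sm : R -> R) :
  WH_solution N1 N2 N3 Sp Sm ->
  (forall t : R, WH_constraint (N1 t) (N2 t) (N3 t) (Sp t) (Sm t)) ->
  (forall t : R, N1 t < 0 /\ 0 < N2 t /\ 0 < N3 t) ->
  is_lim N1 p_infty 0 /\ is_lim N2 p_infty p_infty /\ is_lim N3 p_infty p_infty.
Proof.
  intros Hsol Hcon Hsgn.
  pose proof (D_grow N1 N2 N3 Sp Sm Hsol Hcon Hsgn) as DG.
  assert (B : forall t, Df N1 N2 N3 t <= 2/3 * N2 t /\ Df N1 N2 N3 t <= 2/3 * N3 t
                 /\ - N1 t * Df N1 N2 N3 t <= 4/9).
  { intro t. destruct (Hsgn t) as [s1 [s2 s3]].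
    destruct (cons_facts _ _ _ _ _ s1 s2 s3 (Hcon t)) as [_ [_ c3]].
    unfold Df.
    assert (- N1 t * N3 t <= 2/3) by nra.
    assert (- N1 t * N2 t <= 2/3) by nra.
    assert (0 < - N1 t * N2 t) by nra. assert (0 < - N1 t * N3 t) by nra.
    split; [|split]; nra. }
  split; [|split].
  - apply is_lim_spec. intros eps.
    destruct (DG (/ eps)) as [T HT]. exists T. intros t Ht.
    specialize (HT t Ht). destruct (B t) as [_ [_ b3]]. destruct (Hsgn t) as [s1 _].
    pose proof (cond_pos eps).
    assert (0 < Df N1 N2 N3 t) by (pose proof (Rinv_0_lt_compat eps H); lra).
    rewrite Rminus_0_r, Rabs_left by lra.
    assert (1 < eps * Df N1 N2 N3 t).
    { apply Rmult_lt_compat_l with (r := eps) in HT; [|lra].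
      rewrite Rinv_r in HT; lra. }
    nra.
  - apply is_lim_spec. intros M.
    destruct (DG (2/3 * Rabs M)) as [T HT]. exists T. intros t Ht.
    specialize (HT t Ht). destruct (B t) as [b1 _]. pose proof (Rle_abs M). lra.
  - apply is_lim_spec. intros M.
    destruct (DG (2/3 * Rabs M)) as [T HT]. exists T. intros t Ht.
    specialize (HT t Ht). destruct (B t) as [_ [b2 _]]. pose proof (Rle_abs M). lra.
Qed.
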